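(* The following are theorems of $\mathbf{LEL}$ (for all $a\in\mathbf{A}$, variables $x,y$, $p\in\mathbf{P}$, formulas $\phi$, sentences $\alpha$, and strings $\vec{x}$ of variables and $\vec{a}$ of agents of equal length): (1) $[x:=a]\phi\leftrightarrow[y:=a]\phi[y/x]$, provided $y$ does not occur in $\phi$; (2) $[\vec{x}:=\vec{a}](\mathsf{K}_{\vec{x}}\alpha\to\mathsf{K}_{\vec{x}}[\vec{x}:=\vec{a}]\mathsf{K}_{\vec{x}}\alpha)$; (3) $[x:=a](\neg p_x\to\mathsf{K}_{x}[x:=a]\neg p_x)$.
   Context: Fix a nonempty finite set $\mathbf{A}$ of agents, a countable set $\mathbf{X}$ of variables disjoint from $\mathbf{A}$, and a countable set $\mathbf{P}$ of predicate letters. Formulas and free variables are defined simultaneously: $\phi ::= p_x \mid \top \mid \neg\phi \mid (\phi\wedge\phi) \mid [x:=a]\phi \mid \mathsf{K}_X\alpha$ ($p\in\mathbf{P}$, $x\in\mathbf{X}$, $a\in\mathbf{A}$, $X\subseteq\mathbf{X}$ finite possibly empty, $\alpha$ a formula with no free variables), $FV(p_x)=\{x\}$, $FV(\top)=\emptyset$, $FV(\neg\phi)=FV(\phi)$, $FV(\phi\wedge\psi)=FV(\phi)\cup FV(\psi)$, $FV([x:=a]\phi)=FV(\phi)\setminus\{x\}$, $FV(\mathsf{K}_X\alpha)=X$. Sentences are formulas without free variables. $\bot:=\neg\top$, other Booleans as usual, $\langle x:=a\rangle\phi:=\neg[x:=a]\neg\phi$, $\widehat{\mathsf{K}}_X\alpha:=\neg\mathsf{K}_X\neg\alpha$.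 $\phi[y/x]$ denotes the result of replacing all free occurrences of $x$ in $\phi$ by $y$ (including in the index sets $X$ of subformulas $\mathsf{K}_X\alpha$); it is admissible if $x$ has no free occurrence in $\phi$ within the scope of an operator $[y:=b]$, $b\in\mathbf{A}$. For $\vec{x}=x_1,\dots,x_n$ and $\vec{a}=a_1,\dots,a_n$, $[\vec{x}:=\vec{a}]\phi$ abbreviates $[x_1:=a_1]\cdots[x_n:=a_n]\phi$ (just $\phi$ if $n=0$), $\{\vec x\}=\{x_1,\dots,x_n\}$, $\{\vec a\}=\{a_1,\dots,a_n\}$, $\mathsf{K}_{\vec{x}}\alpha:=\mathsf{K}_{\{\vec{x}\}}\alpha$, and $\mathsf{K}_x:=\mathsf{K}_{\{x\}}$. The system $\mathbf{LEL}$ has axioms: all propositional tautologies; $\mathsf{K}_X(\alpha\to\beta)\to(\mathsf{K}_X\alpha\to\mathsf{K}_X\beta)$; $\mathsf{K}_X\alpha\to\mathsf{K}_Y\alpha$ for $X\subseteq Y$; $[x:=a](\phi\to\psi)\to([x:=a]\phi\to[x:=a]\psi)$; $\langle x:=a\rangle\phi\to[x:=a]\phi$; $\phi\to[x:=a]\phi$ for $x\notin FV(\phi)$; $[y:=a]([x:=a]\phi\to\phi[y/x])$ for admissible $\phi[y/x]$; $[x:=a][y:=b]\phi\to[y:=b][x:=a]\phi$ for $x\neq y$; $\bigwedge_{a\in\mathbf{A}}[x:=a]\phi\to\phi$; $\mathsf{K}_X\alpha\to\alpha$; $[\vec{x}:=\vec{a}](\neg\mathsf{K}_{\vec{x}}\alpha\to\mathsf{K}_{\vec{x}}[\vec{x}:=\vec{a}]\neg\mathsf{K}_{\vec{x}}\alpha)$;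 $[x:=a]\mathsf{K}_{x}\langle x:=a\rangle\top$; $[x:=a](p_x\to\mathsf{K}_{x}[x:=a]p_x)$; $[\vec{x}:=\vec{a}](\bigwedge_{b\in B}[x:=b]\bot\to\mathsf{K}_{\vec{x}}\bigwedge_{b\in B}[x:=b]\bot)$ where $B=\mathbf{A}\setminus\{\vec{a}\}$. Rules: modus ponens; from $\alpha$ infer $\mathsf{K}_\emptyset\alpha$ ($\alpha$ a sentence); from $\phi$ infer $[x:=a]\phi$. (Here $\alpha,\beta$ range over sentences, $\phi,\psi$ over formulas.) *)

(* Defs.v *)
From HB Require Import structures.
From mathcomp Require Import all_boot.
From mathcomp Require Import finmap.

Set Implicit Arguments.
Unset Strict Implicit.
Unset Printing Implicit Defensive.

Local Open Scope fset_scope.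

Section LEL.
Variables (A : finType) (X : countType) (P : countType).

(* Raw syntax.  K Z a is K_S a; well-formedness (a must be a sentence)
   is imposed by [wf] below. *)
Inductive form : Type :=
  | Pred   of P & X
  | Top
  | Neg    of form
  | And    of form & form
  | Assign of X & A & form
  | Kn     of {fset X} & form.

Fixpoint FV (f : form) : {fset X} :=
  match f with
  | Pred _ x => [fset x]
  | Top => fset0
  | Neg g => FV g
  | And g h => FV g `|` FV h
  | Assign x _ g => FV g `\ x
  | Kn Z _ => Z
  end.

Fixpoint wf (f : form) : bool :=
  match f with
  | Pred _ _ | Top => true
  | Neg g => wf g
  | And g h => wf g && wf h
  | Assign _ _ g => wf g
  | Kn _ g => wf g && (FV g == fset0)
  end.

Definition sentence (f : form) : bool := wf f && (FV f == fset0).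

Fixpoint occurs (y : X) (f : form) : bool :=
  match f with
  | Pred _ x => x == y
  | Top => false
  | Neg g => occurs y g
  | And g h => occurs y g || occurs y h
  | Assign z _ g => (z == y) || occurs y g
  | Kn Z g => (y \in Z) || occurs y g
  end.

Definition subst_set (y x : X) (Z : {fset X}) : {fset X} :=
  if x \in Z then (Z `\ x) `|` [fset y] else Z.

Fixpoint subst (y x : X) (f : form) : form :=
  match f with
  | Pred p z => Pred p (if z == x then y else z)
  | Top => Top
  | Neg g => Neg (subst y x g)
  | And g h => And (subst y x g) (subst y x h)
  | Assign z a g => if z == x then Assign z a g else Assign z a (subst y x g)
  | Kn Z g => Kn (subst_set y x Z) g
  end.

(* f[y/x] is admissible: x has no free occurrence in f within the scope
   of an operator [y := b] *)
Fixpoint admissible (y x : X) (f : form) : bool :=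
  match f with
  | Pred _ _ | Top | Kn _ _ => true
  | Neg g => admissible y x g
  | And g h => admissible y x g && admissible y x h
  | Assign z _ g =>
      if z == x then true
      else if z == y then x \notin FV g
      else admissible y x g
  end.

Definition Bot := Neg Top.
Definition Imp (f g : form) := Neg (And f (Neg g)).
Definition Iff (f g : form) := And (Imp f g) (Imp g f).
Definition Dia (x : X) (a : A) (f : form) := Neg (Assign x a (Neg f)).
Definition bigAnd (fs : seq form) := foldr And Top fs.

Definition massign (xs : seq X) (ags : seq A) (f : form) : form :=
  foldr (fun p g => Assign p.1 p.2 g) f (zip xs ags).
Definition Kv (xs : seq X) (f : form) := Kn [fset x | x in xs] f.
Definition K1 (x : X) (f : form) := Kn [fset x] f.

(* propositional tautologies: true under every assignment of truth values
   to the maximal non-Boolean subformulas *)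
Fixpoint peval (v : form -> bool) (f : form) : bool :=
  match f with
  | Top => true
  | Neg g => ~~ peval v g
  | And g h => peval v g && peval v h
  | _ => v f
  end.
Definition tautology (f : form) : Prop := forall v, peval v f.

Inductive axiom : form -> Prop :=
  | ax_taut f : tautology f -> axiom f
  | ax_K Z al be : sentence al -> sentence be ->
      axiom (Imp (Kn Z (Imp al be)) (Imp (Kn Z al) (Kn Z be)))
  | ax_mono Z Z2 al : sentence al -> Z `<=` Z2 ->
      axiom (Imp (Kn Z al) (Kn Z2 al))
  | ax_Kassign x a f g :
      axiom (Imp (Assign x a (Imp f g)) (Imp (Assign x a f) (Assign x a g)))
  | ax_func x a f : axiom (Imp (Dia x a f) (Assign x a f))
  | ax_vac x a f : x \notin FV f -> axiom (Imp f (Assign x a f))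
  | ax_subst x y a f : admissible y x f ->
      axiom (Assign y a (Imp (Assign x a f) (subst y x f)))
  | ax_comm x y a b f : x != y ->
      axiom (Imp (Assign x a (Assign y b f)) (Assign y b (Assign x a f)))
  | ax_cover x f :
      axiom (Imp (bigAnd [seq Assign x a f | a <- enum A]) f)
  | ax_T Z al : sentence al -> axiom (Imp (Kn Z al) al)
  | ax_negintro xs ags al : size xs = size ags -> sentence al ->
      axiom (massign xs ags
               (Imp (Neg (Kv xs al))
                    (Kv xs (massign xs ags (Neg (Kv xs al))))))
  | ax_selfid x a : axiom (Assign x a (K1 x (Dia x a Top)))
  | ax_posintro x a p :
      axiom (Assign x a (Imp (Pred p x) (K1 x (Assign x a (Pred p x)))))
  | ax_absent xs ags x : size xs = size ags ->
      let B := [seq b <- enum A | b \notin ags] in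
      let F := bigAnd [seq Assign x b Bot | b <- B] in
      axiom (massign xs ags (Imp F (Kv xs F))).

Inductive derivable : form -> Prop :=
  | d_ax f : axiom f -> wf f -> derivable f
  | d_mp f g : derivable (Imp f g) -> derivable f -> derivable g
  | d_nec al : sentence al -> derivable al -> derivable (Kn fset0 al)
  | d_gen x a f : derivable f -> derivable (Assign x a f).

End LEL.

Arguments Pred {A X P}.
Arguments Top {A X P}.
Arguments Bot {A X P}.

(* Main.v *)
Require Import Defs.
From mathcomp Require Import all_boot finmap.
Local Open Scope fset_scope.

Set Implicit Arguments.
Unset Strict Implicit.
Section S.
Variables (A : finType) (X : countType) (P : countType).
Notation F := (form A X P).
Implicit Types f g h phi : F.

Definition mas (l : seq (X * A)) f : F := foldr (fun p g => Assign p.1 p.2 g) f l.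

Lemma wf_imp f g : wf (Imp f g) = wf f && wf g. Proof. by []. Qed.
Lemma wf_mas l f : wf (mas l f) = wf f. Proof. by elim: l => //= [[x a] l IH]. Qed.

Lemma der_wf f : derivable f -> wf f.
Proof.
elim=> {f} [f _ w //| f g _ IH _ _ | al Hs _ _ | x a f _ IH //].
- by move: IH; rewrite wf_imp => /andP[].
- by [].
Qed.

Ltac tt := let v := fresh "v" in intro v; rewrite /Imp /Iff /=;
  repeat match goal with |- context [peval ?w ?f] => is_var f; case: (peval w f) end; done.

Lemma T_id f : tautology (Imp f f). Proof. tt. Qed.
Lemma T_trans f g h : tautology (Imp (Imp f g) (Imp (Imp g h) (Imp f h))). Proof. tt. Qed.
Lemma T_and f g : tautology (Imp f (Imp g (And f g))). Proof. tt. Qed.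
Lemma T_weak f g : tautology (Imp f (Imp g f)). Proof. tt. Qed.
Lemma T_negw f g : tautology (Imp (Neg f) (Imp f g)). Proof. tt. Qed.
Lemma T_idem (a p q r : F) : tautology (Imp (Imp a p) (Imp (Imp (Neg a) q) (Imp (Imp p r) (Imp (Imp q r) r)))).
Proof. tt. Qed.
Lemma T_contra (a b : F) : tautology (Imp (Imp (Neg a) b) (Imp (Neg b) a)). Proof. tt. Qed.
Lemma T_p2 (ka kn n knn kb : F) : tautology (Imp (Imp (Neg kn) knn) (Imp (Imp kn n)
   (Imp (Imp n (Neg ka)) (Imp (Imp knn kb) (Imp ka kb))))). Proof. tt. Qed.
Lemma T_p3 (al p ka kn km : F) : tautology (Imp (Imp al p) (Imp (Imp ka al)
   (Imp (Imp (Neg ka) kn) (Imp (Imp kn km) (Imp (Neg p) km))))). Proof. tt. Qed.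
Lemma T_p3b (p ka : F) : tautology (Imp (Imp p ka) (Imp (Neg ka) (Neg p))). Proof. tt. Qed.

Lemma taut_der f : tautology f -> wf f -> derivable f.
Proof. by move=> T w; apply: d_ax w; apply: ax_taut. Qed.

Lemma taut2 f1 f2 g : tautology (Imp f1 (Imp f2 g)) -> wf g ->
  derivable f1 -> derivable f2 -> derivable g.
Proof.
move=> T wg d1 d2.
have W : wf (Imp f1 (Imp f2 g)) by rewrite !wf_imp (der_wf d1) (der_wf d2) wg.
exact: d_mp (d_mp (taut_der T W) d1) d2.
Qed.

Lemma mas_gen l f : derivable f -> derivable (mas l f).
Proof. by elim: l => //= [[x a] l IH] d; apply: d_gen; apply: IH. Qed.

Lemma mas_K l f g : wf f -> wf g ->
  derivable (Imp (mas l (Imp f g)) (Imp (mas l f) (mas l g))).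
Proof.
move=> wf' wg; elim: l => [|[x a] l IH] /=.
  by apply: taut_der (T_id _) _; rewrite !wf_imp wf' wg.
set Af := mas l (Imp f g); set B := mas l f; set C := mas l g.
have wA : wf Af by rewrite /Af wf_mas wf_imp wf' wg.
have wB : wf B by rewrite /B wf_mas.
have wC : wf C by rewrite /C wf_mas.
have k1 : derivable (Imp (Assign x a Af) (Assign x a (Imp B C))).
  apply: d_mp (d_gen x a IH); apply: d_ax; first exact: ax_Kassign.
  by rewrite /Imp /= wA wB wC.
have k2 : derivable (Imp (Assign x a (Imp B C)) (Imp (Assign x a B) (Assign x a C))).
  by apply: d_ax; [exact: ax_Kassign | rewrite /Imp /= wB wC].
apply: taut2 (T_trans _ _ _) _ k1 k2.
by rewrite !wf_imp /= wA wB wC.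
Qed.

Lemma mas_mp l f g : derivable (mas l (Imp f g)) -> derivable (mas l f) -> derivable (mas l g).
Proof.
move=> d1; have := der_wf d1; rewrite wf_mas wf_imp => /andP[wf' wg].
exact: d_mp (d_mp (mas_K l wf' wg) d1).
Qed.

Lemma btaut1 l f1 g : tautology (Imp f1 g) -> wf g ->
  derivable (mas l f1) -> derivable (mas l g).
Proof.
move=> T wg d1.
have W : wf (Imp f1 g) by rewrite wf_imp wg -(wf_mas l) (der_wf d1).
exact: mas_mp (mas_gen l (taut_der T W)) d1.
Qed.

Lemma btaut4 l f1 f2 f3 f4 g : tautology (Imp f1 (Imp f2 (Imp f3 (Imp f4 g)))) -> wf g ->
  derivable (mas l f1) -> derivable (mas l f2) -> derivable (mas l f3) ->
  derivable (mas l f4) -> derivable (mas l g).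
Proof.
move=> T wg d1 d2 d3 d4.
have w1 := der_wf d1; have w2 := der_wf d2; have w3 := der_wf d3; have w4 := der_wf d4.
rewrite wf_mas in w1; rewrite wf_mas in w2; rewrite wf_mas in w3; rewrite wf_mas in w4.
have W : wf (Imp f1 (Imp f2 (Imp f3 (Imp f4 g)))) by rewrite !wf_imp w1 w2 w3 w4 wg.
exact: mas_mp (mas_mp (mas_mp (mas_mp (mas_gen l (taut_der T W)) d1) d2) d3) d4.
Qed.

Lemma mono l f g : derivable (Imp f g) -> derivable (Imp (mas l f) (mas l g)).
Proof.
move=> d; have := der_wf d; rewrite wf_imp => /andP[wf' wg].
exact: d_mp (mas_K l wf' wg) (mas_gen l d).
Qed.

Lemma imp_trans f g h : derivable (Imp f g) -> derivable (Imp g h) -> derivable (Imp f h).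
Proof.
move=> d1 d2; have := der_wf d1; have := der_wf d2; rewrite !wf_imp => /andP[_ wh] /andP[wf' _].
by apply: taut2 (T_trans _ _ _) _ d1 d2; rewrite wf_imp wf' wh.
Qed.


Lemma FV_mas_notin l f z : z \in map fst l -> z \notin FV (mas l f).
Proof.
elim: l => //= [[x a] l IH]; rewrite inE /= => /orP[/eqP->|h].
  by rewrite in_fsetD1 eqxx.
by rewrite in_fsetD1 (negbTE (IH h)) andbF.
Qed.

Lemma FV_mas_sub l f z : z \in FV (mas l f) -> z \in FV f.
Proof. by elim: l => //= [[x a] l IH]; rewrite in_fsetD1 => /andP[_ /IH]. Qed.

Lemma vac_mas l f : (forall z, z \in map fst l -> z \notin FV f) -> wf f ->
  derivable (Imp f (mas l f)).
Proof.
move=> H wf'; elim: l H => [|[y b] l IH] H /=.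
  by apply: taut_der (T_id _) _; rewrite wf_imp wf'.
have d1 : derivable (Imp f (Assign y b f)).
  by apply: d_ax; [apply: ax_vac; apply: H; rewrite inE eqxx | rewrite /Imp /= wf'].
have d2 : derivable (Imp (Assign y b f) (Assign y b (mas l f))).
  by apply: (mono [:: (y, b)]); apply: IH => z hz; apply: H; rewrite inE hz orbT.
exact: imp_trans d1 d2.
Qed.

Lemma subst_set_id (x : X) Z : subst_set x x Z = Z.
Proof.
rewrite /subst_set; case: ifP => // hx; apply/fsetP => w.
rewrite in_fsetU in_fsetD1 inE; case: (w =P x) => [->|] //=; by rewrite orbF.
Qed.

Lemma subst_id (x : X) phi : subst x x phi = phi.
Proof.
elim: phi => [p z| |g IH|g IHg h IHh|z b g IH|Z g IH] //=.
- by case: eqP => [->|].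
- by rewrite IH.
- by rewrite IHg IHh.
- by case: eqP => // _; rewrite IH.
- by rewrite subst_set_id.
Qed.

Lemma adm_xx (x : X) phi : admissible x x phi.
Proof.
elim: phi => [p z| |g IH|g IHg h IHh|z b g IH|Z g IH] //=.
- by rewrite IHg IHh.
- by case: eqP.
Qed.

Lemma occ_FV (y : X) phi : ~~ occurs y phi -> y \notin FV phi.
Proof.
elim: phi => [p z| |g IH|g IHg h IHh|z b g IH|Z g IH] //=.
- by rewrite inE eq_sym.
- by rewrite negb_or in_fsetU => /andP[/IHg/negbTE -> /IHh/negbTE ->].
- by rewrite negb_or in_fsetD1 => /andP[_ /IH/negbTE ->]; rewrite andbF.
- by rewrite negb_or => /andP[].
Qed.

Lemma subst_noocc (x y : X) phi : ~~ occurs y phi -> subst x y phi = phi.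
Proof.
elim: phi => [p z| |g IH|g IHg h IHh|z b g IH|Z g IH] //=.
- by move/negbTE->.
- by move/IH->.
- by rewrite negb_or => /andP[/IHg -> /IHh ->].
- by rewrite negb_or => /andP[/negbTE -> /IH ->].
- by rewrite negb_or /subst_set => /andP[/negbTE -> _].
Qed.

Lemma subst_inv (x y : X) phi : ~~ occurs y phi -> subst x y (subst y x phi) = phi.
Proof.
elim: phi => [p z| |g IH|g IHg h IHh|z b g IH|Z g IH] //=.
- move=> hz; case: (z =P x) => [->|_]; first by rewrite eqxx.
  by rewrite (negbTE hz).
- by move/IH->.
- by rewrite negb_or => /andP[/IHg -> /IHh ->].
- rewrite negb_or => /andP[hzy hg]; case: (z =P x) => [ezx|nzx] /=.
    by rewrite (negbTE hzy) subst_noocc.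
  by rewrite (negbTE hzy) IH.
- rewrite negb_or => /andP[hy _]; congr Kn.
  rewrite /subst_set; case: (boolP (x \in Z)) => hx; last by rewrite (negbTE hy).
  rewrite in_fsetU in_fset1 eqxx orbT; apply/fsetP => w.
  rewrite !(in_fsetU, in_fsetD1, in_fset1).
  case: (w =P x) => [->|nwx] /=; first by rewrite hx orbT.
  case: (w =P y) => [->|nwy] /=; last by rewrite !orbF.
  by rewrite (negbTE hy).
Qed.

Lemma adm_noocc (x y : X) phi : ~~ occurs y phi -> admissible y x phi.
Proof.
elim: phi => [p z| |g IH|g IHg h IHh|z b g IH|Z g IH] //=.
- by rewrite negb_or => /andP[/IHg -> /IHh ->].
- by rewrite negb_or => /andP[/negbTE -> /IH ->]; case: ifP.
Qed.

Lemma adm_inv (x y : X) phi : ~~ occurs y phi -> admissible x y (subst y x phi).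
Proof.
elim: phi => [p z| |g IH|g IHg h IHh|z b g IH|Z g IH] //=.
- by rewrite negb_or => /andP[/IHg -> /IHh ->].
- rewrite negb_or => /andP[hzy hg]; case: eqP => [ezx|nzx] /=.
    by rewrite (negbTE hzy) ezx eqxx occ_FV.
  by rewrite (negbTE hzy); case: eqP => // _; apply: IH.
Qed.

Lemma FV_subst (x y : X) phi : x \in FV (subst y x phi) -> x = y.
Proof.
elim: phi => [p z| |g IH|g IHg h IHh|z b g IH|Z g IH] //=.
- by rewrite in_fset1; case: ifP => [_ /eqP //| nzx /eqP exz]; rewrite exz eqxx in nzx.
- by rewrite in_fsetU => /orP[/IHg|/IHh].
- case: eqP => [->|nzx] /=; first by rewrite in_fsetD1 eqxx.
  by rewrite in_fsetD1 => /andP[_ /IH].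
- rewrite /subst_set; case: ifP => hx; last by rewrite hx.
  by rewrite in_fsetU in_fsetD1 eqxx in_fset1 => /eqP.
Qed.

Lemma wf_subst (x y : X) phi : wf phi -> wf (subst y x phi).
Proof.
elim: phi => [p z| |g IH|g IHg h IHh|z b g IH|Z g IH] //=.
- by case/andP => /IHg -> /IHh ->.
- by case: ifP => //= _; apply: IH.
Qed.

Lemma idem l phi : wf phi -> derivable (mas l (Imp (mas l phi) phi)).
Proof.
move=> wp; case: l => [|[x a] l] /=.
  by apply: taut_der (T_id _) _; rewrite wf_imp wp.
set Aa := Assign x a (mas l phi).
have wM : wf (mas l phi) by rewrite wf_mas.
have wA : wf Aa by [].
have s1 : derivable (Assign x a (Imp Aa (mas l phi))).
  have := d_ax (ax_subst a (adm_xx x (mas l phi))); rewrite subst_id; apply.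
  by rewrite /Imp /= wM.
have s2 : derivable (Imp (Neg Aa) (mas l (Neg Aa))).
  apply: vac_mas => // z hz; rewrite /=.
  by apply: (FV_mas_notin (l := (x, a) :: l)); rewrite inE hz orbT.
have s3 : derivable (Imp (mas l phi) (mas l (Imp Aa phi))).
  by apply: mono; apply: taut_der (T_weak _ _) _; rewrite !wf_imp /= wp wM.
have s4 : derivable (Imp (mas l (Neg Aa)) (mas l (Imp Aa phi))).
  by apply: mono; apply: taut_der (T_negw _ _) _; rewrite !wf_imp /= wp wM.
have := btaut4 (l := [:: (x, a)]) (T_idem Aa (mas l phi) (mas l (Neg Aa)) (mas l (Imp Aa phi)))
  _ s1 (d_gen x a s2) (d_gen x a s3) (d_gen x a s4).
apply; by rewrite wf_mas wf_imp wA wp.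
Qed.

Lemma part1 (x y : X) (a : A) phi : wf phi -> ~~ occurs y phi ->
  derivable (Iff (Assign x a phi) (Assign y a (subst y x phi))).
Proof.
move=> wp hy; set psi := subst y x phi.
have wps : wf psi by apply: wf_subst.
have f1 : derivable (Assign y a (Imp (Assign x a phi) psi)).
  by apply: d_ax; [apply: ax_subst; apply: adm_noocc | rewrite /Imp /= wp wps].
have f2 : derivable (Imp (Assign x a phi) (Assign y a (Assign x a phi))).
  apply: d_ax; last by rewrite /Imp /= wp.
  by apply: ax_vac; rewrite /= in_fsetD1 (negbTE (occ_FV hy)) andbF.
have d1 : derivable (Imp (Assign x a phi) (Assign y a psi)).
  apply: imp_trans f2 _.
  by apply: (d_mp (mas_K [:: (y, a)] _ _) f1).
have g1 : derivable (Assign x a (Imp (Assign y a psi) phi)).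
  have := d_ax (ax_subst (x := y) (y := x) a (adm_inv x hy)).
  rewrite /psi subst_inv //; apply; by rewrite /Imp /= wp wps.
have g2 : derivable (Imp (Assign y a psi) (Assign x a (Assign y a psi))).
  apply: d_ax; last by rewrite /Imp /= wps.
  apply: ax_vac; rewrite /= in_fsetD1.
  case: (x =P y) => //= nxy; apply/negP => /FV_subst; exact: nxy.
have d2 : derivable (Imp (Assign y a psi) (Assign x a phi)).
  apply: imp_trans g2 _.
  by apply: (d_mp (mas_K [:: (x, a)] _ _) g1).
apply: taut2 (T_and _ _) _ d1 d2.
by rewrite /Iff /Imp /= wp wps.
Qed.

Lemma sent_mas l f : wf f -> (forall z, z \in FV f -> z \in map fst l) -> sentence (mas l f).
Proof.
move=> wf' H; rewrite /sentence wf_mas wf' /=; apply/eqP/fsetP => z.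
rewrite in_fset0; apply/negbTE/negP => hz.
by have := FV_mas_notin f (H z (FV_mas_sub hz)); rewrite hz.
Qed.

Lemma sent_imp f g : sentence f -> sentence g -> sentence (Imp f g).
Proof.
rewrite /sentence /Imp /= => /andP[-> /eqP->] /andP[-> /eqP->].
by rewrite fsetU0.
Qed.

Lemma wf_mas_imp l f g : wf f -> wf g -> wf (mas l (Imp f g)).
Proof. by move=> a b; rewrite wf_mas wf_imp a b. Qed.

Lemma sent_wf f : sentence f -> wf f. Proof. by case/andP. Qed.

Lemma necK Z f g : sentence f -> sentence g -> derivable (Imp f g) ->
  derivable (Imp (Kn Z f) (Kn Z g)).
Proof.
move=> sf sg d.
have sfg := sent_imp sf sg.
have e1 := d_nec sfg d.
have e2 : derivable (Kn Z (Imp f g)).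
  apply: d_mp e1; apply: d_ax; first by apply: ax_mono => //; apply: fsub0set.
  by rewrite wf_imp; apply/andP; split; [exact: sfg | exact: sfg].
apply: d_mp e2; apply: d_ax; first exact: ax_K.
rewrite !wf_imp; apply/andP; split; first exact: sfg.
by apply/andP; split; [exact: sf | exact: sg].
Qed.

Lemma part2 (xs : seq X) (ags : seq A) (al : F) : size xs = size ags -> sentence al ->
  derivable (massign xs ags (Imp (Kv xs al) (Kv xs (massign xs ags (Kv xs al))))).
Proof.
move=> hs hal.
set l := zip xs ags.
have hl : map fst l = xs by apply: unzip1_zip; rewrite hs.
set S := [fset z | z in xs].
change (derivable (mas l (Imp (Kn S al) (Kn S (mas l (Kn S al)))))).
have hS : forall z, z \in S -> z \in map fst l.
  by move=> z; rewrite hl => /imfsetP [w /= hw ->].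
have hN : forall g, sentence g -> sentence (mas l (Neg (Kn S g))).
  by move=> g sg; apply: sent_mas => //=.
set N := fun g => mas l (Neg (Kn S g)).
have sN : sentence (N al) by apply: hN.
have sNN : sentence (N (N al)) by apply: hN.
have sb : sentence (mas l (Kn S al)) by apply: sent_mas.
have n1 : derivable (mas l (Imp (Neg (Kn S al)) (Kn S (N al)))).
  apply: d_ax; first exact: ax_negintro.
  by rewrite wf_mas wf_imp; apply/andP; split; [exact: hal | exact: sN].
have n2 : derivable (mas l (Imp (Neg (Kn S (N al))) (Kn S (N (N al))))).
  apply: d_ax; first exact: ax_negintro.
  by rewrite wf_mas wf_imp; apply/andP; split; [exact: sN | exact: sNN].
have n3 : derivable (Imp (Kn S (N al)) (N al)).
  apply: d_ax; first exact: ax_T.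
  by rewrite wf_imp; apply/andP; split; [exact: sN | exact: sent_wf].
have n4 : derivable (mas l (Imp (N al) (Neg (Kn S al)))).
  by apply: idem; exact: hal.
have n5 : derivable (Imp (N (N al)) (mas l (Kn S al))).
  have := btaut1 (T_contra (Kn S al) (Kn S (N al))) _ n1.
  move/(_ ltac:(rewrite wf_imp; apply/andP; split; [exact: sN | exact: hal])) => h.
  by apply: (d_mp (mas_K l _ _) h); [exact: sN | exact: hal].
have n6 := necK S sNN sb n5.
apply: (btaut4 (T_p2 (Kn S al) (Kn S (N al)) (N al) (Kn S (N (N al))) (Kn S (mas l (Kn S al)))))
  n2 (mas_gen l n3) n4 (mas_gen l n6).
by rewrite wf_imp; apply/andP; split; [exact: hal | exact: sb].
Qed.

Lemma part3 (x : X) (a : A) (p : P) :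
  derivable (Assign x a (Imp (Neg (Pred p x)) (K1 x (Assign x a (Neg (Pred p x))))) : F).
Proof.
set px : F := Pred p x.
set l := [:: (x, a)].
set al := Assign x a px.
set S := [fset x].
have hSx : [fset z | z in [:: x]] = S.
  apply/fsetP => z; rewrite in_fset1; apply/imfsetP/eqP => [[w /=]|->].
    by rewrite inE => /eqP -> ->.
  by exists x; rewrite ?inE.
have hS : forall z, z \in S -> z \in map fst l by move=> z; rewrite in_fset1 inE.
have sal : sentence (mas l px) by apply: sent_mas => // z; rewrite /= in_fset1 inE.
change (is_true (sentence al)) in sal.
set M := Assign x a (Neg (Kn S al)).
set Q := Assign x a (Neg px).
have sM : sentence (mas l (Neg (Kn S al))) by apply: sent_mas => //.
change (is_true (sentence M)) in sM.
have sQ : sentence (mas l (Neg px)) by apply: sent_mas => // z; rewrite /= in_fset1 inE.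
change (is_true (sentence Q)) in sQ.
have p1 : derivable (Assign x a (Imp px (Kn S al))).
  apply: d_ax; first exact: ax_posintro.
  exact: (wf_mas_imp l (f:=px) (g:=Kn S al) erefl sal).
have p2 : derivable (Assign x a (Imp (Neg (Kn S al)) (Kn S M))).
  have := d_ax (ax_negintro (xs := [:: x]) (ags := [:: a]) erefl sal).
  rewrite /Kv hSx; apply.
  exact: (wf_mas_imp l (f:=Neg (Kn S al)) (g:=Kn S M) sal sM).
have p3 : derivable (Imp (Kn S al) al).
  by apply: d_ax; [exact: ax_T | exact: (wf_mas_imp [::] (f:=Kn S al) (g:=al) sal (sent_wf sal))].
have p4 : derivable (Assign x a (Imp al px)).
  have := d_ax (ax_subst a (adm_xx x px)); rewrite subst_id; apply.
  by [].
have p5 : derivable (Imp M Q).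
  have := btaut1 (l := l) (T_p3b px (Kn S al)) _ p1.
  move/(_ (wf_mas_imp [::] (f:=Neg (Kn S al)) (g:=Neg px) sal erefl)) => h.
  exact: (d_mp (mas_K l (f:=Neg (Kn S al)) (g:=Neg px) sal erefl) h).
have p6 := necK S sM sQ p5.
apply: (btaut4 (l := l) (T_p3 al px (Kn S al) (Kn S M) (Kn S Q))) p4 (d_gen x a p3) p2 (d_gen x a p6).
exact: (wf_mas_imp [::] (f:=Neg px) (g:=Kn S Q) erefl sQ).
Qed.
End S.
Unset Implicit Arguments.

Theorem proposition5 (A : finType) (X : countType) (P : countType) :
  0 < #|A| ->
  (* (1) *)
  (forall (x y : X) (a : A) (phi : form A X P),
      wf phi -> ~~ occurs y phi ->
      derivable (Iff (Assign x a phi) (Assign y a (subst y x phi)))) /\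
  (* (2) *)
  (forall (xs : seq X) (ags : seq A) (al : form A X P),
      size xs = size ags -> sentence al ->
      derivable (massign xs ags
                   (Imp (Kv xs al) (Kv xs (massign xs ags (Kv xs al)))))) /\
  (* (3) *)
  (forall (x : X) (a : A) (p : P),
      derivable (Assign x a
                   (Imp (Neg (Pred p x)) (K1 x (Assign x a (Neg (Pred p x))))) : form A X P)).
Proof.
move=> _; split; first by move=> x y a phi; apply: part1.
split; first by move=> xs ags al; apply: part2.
by move=> x a p; apply: part3.
Qed.
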